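(* Let $L\ge1$ and let $U\in\mathcal{U}$ satisfy $\operatorname{ind}(U)=0$ and $\operatorname{prop}(U)\le L$. Then there exist $V\in\mathrm{U}(B_0(2L))$ and $W\in\mathrm{U}(B_{-L}(2L))$ with $U=VW$.
   Context: Let $\ell^2(\mathbb{C})$ be the Hilbert space of square-summable complex sequences indexed by $\mathbb{Z}$, with standard orthonormal basis $\{e_i\}_{i\in\mathbb{Z}}$, and $\mathcal{B}$ the algebra of bounded operators on it. Each $T\in\mathcal{B}$ has matrix entries $T_{ij}=\langle e_i,Te_j\rangle$. The propagation is $\operatorname{prop}(T)=\sup\{|i-j|: T_{ij}\ne0\}$, and $\mathcal{U}$ denotes the set of unitary operators in $\mathcal{B}$ of finite propagation. The index of $U\in\mathcal{U}$ is $\operatorname{ind}(U)=\sum_{i<0,\,j\ge0}|U_{ij}|^2-\sum_{i\ge0,\,j<0}|U_{ij}|^2$ (a finite sum). For $k\in\mathbb{Z}$ and $M\ge1$, $B_k(M)=\{T\in\mathcal{B}: T_{ij}=0 \text{ unless } k+nM\le i,j<k+(n+1)M\text{ for some }n\in\mathbb{Z}\}$ is the algebra of block-diagonal operators with blocks of size $M$ starting at $k$, and $\mathrm{U}(B_k(M))$ is its group of unitary elements. *)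

(* Defs.v *)
From HB Require Import structures.
From mathcomp Require Import all_boot all_order all_algebra.
From mathcomp Require Import complex.
From mathcomp Require Import reals.
Set Implicit Arguments. Unset Strict Implicit. Unset Printing Implicit Defensive.
Import Order.TTheory GRing.Theory Num.Theory.
Local Open Scope ring_scope.
Local Open Scope complex_scope.

(* Complex numbers C = R[i] over the real numbers R : realType.
   An (infinite) matrix indexed by Z x Z: T i j = <e_i, T e_j>. *)
Definition mx (R : realType) := int -> int -> R[i].

Section Defs.
Variable R : realType.

Definition prop_le (T : mx R) (N : nat) : Prop :=
  forall i j : int, (N < `|i - j|)%N -> T i j = 0.

Definition adj (T : mx R) : mx R := fun i j => (T j i)^*.

Definition idmx : mx R := fun i j => (i == j)%:R.

(* Matrix product (A B)_{ij} = \sum_k A_{ik} B_{kj}, written for A with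
   prop(A) <= N, in which case only k with |i - k| <= N contribute. *)
Definition mulmx_band (N : nat) (A B : mx R) : mx R :=
  fun i j => \sum_(t < (N + N).+1) A i (i - N%:Z + t%:Z) * B (i - N%:Z + t%:Z) j.

Definition unitary_fp (T : mx R) : Prop :=
  exists N : nat, prop_le T N /\
    mulmx_band N (adj T) T = idmx /\ mulmx_band N T (adj T) = idmx.

(* ind(U) = \sum_{i<0, j>=0} |U_ij|^2 - \sum_{i>=0, j<0} |U_ij|^2, written
   for U with prop(U) <= N: only -N <= i < 0 <= j < N (resp. symmetrically)
   contribute. *)
Definition index_band (N : nat) (U : mx R) : R[i] :=
  \sum_(a < N) \sum_(b < N) `|U (- (a.+1)%:Z) b%:Z| ^+ 2
  - \sum_(a < N) \sum_(b < N) `|U a%:Z (- (b.+1)%:Z)| ^+ 2.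

Definition block_diag (k : int) (M : nat) (T : mx R) : Prop :=
  forall i j : int, T i j != 0 ->
    exists n : int,
      [/\ k + n * M%:Z <= i, i < k + (n + 1) * M%:Z,
          k + n * M%:Z <= j & j < k + (n + 1) * M%:Z].

End Defs.

(* Main.v *)
Require Import Defs.
From HB Require Import structures.
From mathcomp Require Import all_boot all_order all_algebra.
From mathcomp Require Import complex reals zify.
From Stdlib Require Import FunctionalExtensionality.
Import Order.TTheory GRing.Theory Num.Theory Num.Def.
Local Open Scope ring_scope.

Section Band.
Variable R : realType.
Local Notation C := (R[i]).

Definition isum (a : int) (n : nat) (F : int -> C) := \sum_(t < n) F (a + t%:Z).

Lemma isum_cat a n1 n2 F : isum a (n1 + n2) F = isum a n1 F + isum (a + n1%:Z) n2 F.
Proof.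
rewrite /isum big_split_ord /=; congr (_ + _); apply: eq_bigr => t _.
by congr F; rewrite /= PoszD addrA.
Qed.

Lemma isum0 a n F : (forall t, (t < n)%N -> F (a + t%:Z) = 0) -> isum a n F = 0.
Proof. by move=> h; rewrite /isum big1 // => t _; apply: h. Qed.

Lemma isum1 a F : isum a 1 F = F a.
Proof. by rewrite /isum big_ord1 addr0. Qed.

Lemma isum_sub a n a' n' F :
  (forall k, a' <= k -> k < a' + n'%:Z -> F k != 0 -> (a <= k) && (k < a + n%:Z)) ->
  a' <= a -> a + n%:Z <= a' + n'%:Z -> isum a n F = isum a' n' F.
Proof.
move=> hF h1 h2.
have hz : forall k, a' <= k -> k < a' + n'%:Z -> ~~ ((a <= k) && (k < a + n%:Z)) -> F k = 0.
  by move=> k hk1 hk2 hk; apply/eqP; apply: contraNT hk; apply: hF.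
set d := `|a - a'|%N; set e := (n' - d - n)%N.
have ha : a = a' + d%:Z by rewrite /d; lia.
have hn : n' = (d + n + e)%N by rewrite /e /d; lia.
rewrite hn !isum_cat (@isum0 _ d); last first.
  by move=> t ht; apply: hz; [lia|lia|apply/negP => /andP [h3 h4]; lia].
rewrite (@isum0 _ e); last first.
  by move=> t ht; apply: hz; [lia|lia|apply/negP => /andP [h3 h4]; lia].
by rewrite add0r addr0 -ha.
Qed.

Lemma isum_eq a n a' n' F :
  (forall k, F k != 0 -> [&& a <= k, k < a + n%:Z, a' <= k & k < a' + n'%:Z]) ->
  isum a n F = isum a' n' F.
Proof.
move=> hF; set d := `|a - a'|%N.
rewrite (@isum_sub a n (a - d%:Z) (d + d + n + n')%N); last 3 first.
- by move=> k _ _ /hF /and4P [h1 h2 h3 h4]; apply/andP.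
- lia.
- rewrite /d; lia.
rewrite (@isum_sub a' n' (a - d%:Z) (d + d + n + n')%N) //.
- by move=> k _ _ /hF /and4P [h1 h2 h3 h4]; apply/andP.
- rewrite /d; lia.
- rewrite /d; lia.
Qed.


Lemma propP (A : mx R) N i j : prop_le A N -> A i j != 0 -> (`|i - j| <= N)%N.
Proof. by move=> h hA; rewrite leqNgt; apply/negP => /h; apply/eqP. Qed.


Arguments propP {A N i j}.

Lemma mulf_neq0P (x y : C) : x * y != 0 -> (x != 0) && (y != 0).
Proof. by rewrite mulf_eq0 negb_or. Qed.

Lemma mbE N (A B : mx R) i j :
  mulmx_band N A B i j = isum (i - N%:Z) (N + N).+1 (fun k => A i k * B k j).
Proof. by []. Qed.

Ltac fext := let i := fresh "i" in let j := fresh "j" in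
  apply: functional_extensionality => i; apply: functional_extensionality => j.

Lemma mb_eq N M (A B : mx R) : prop_le A N -> prop_le A M ->
  mulmx_band N A B = mulmx_band M A B.
Proof.
move=> hN hM; fext; rewrite !mbE; apply: isum_eq => k /mulf_neq0P /andP [h1 h2].
have := propP hN h1; have := propP hM h1; move=> *; apply/and4P; split; lia.
Qed.

Lemma mb_prop a b (A B : mx R) : prop_le A a -> prop_le B b ->
  prop_le (mulmx_band a A B) (a + b).
Proof.
move=> hA hB i j hij; rewrite /mulmx_band big1 // => t _.
set k := (i - a%:Z + t%:Z).
case: (eqVneq (A i k) 0) => [->|h1]; first by rewrite mul0r.
case: (eqVneq (B k j) 0) => [->|h2]; first by rewrite mulr0.
have := propP hA h1; have := propP hB h2; rewrite /k; lia.
Qed.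

Lemma mb_assoc a b (A B D : mx R) : prop_le B b ->
  mulmx_band (a + b) (mulmx_band a A B) D = mulmx_band a A (mulmx_band b B D).
Proof.
move=> hB; fext.
have inner : forall s : 'I_(a + a).+1,
  mulmx_band b B D (i - a%:Z + s%:Z) j =
  isum (i - (a + b)%:Z) (a + b + (a + b)).+1 (fun k => B (i - a%:Z + s%:Z) k * D k j).
  move=> s; rewrite mbE; apply: isum_eq => k /mulf_neq0P /andP [h1 h2].
  have := propP hB h1; have := ltn_ord s; move=> *; apply/and4P; split; lia.
symmetry.
transitivity (\sum_(s < (a + a).+1) A i (i - a%:Z + s%:Z) *
   isum (i - (a + b)%:Z) (a + b + (a + b)).+1 (fun k => B (i - a%:Z + s%:Z) k * D k j)).
  by apply: eq_bigr => s _; rewrite inner.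
rewrite /isum; under eq_bigr => s _ do rewrite mulr_sumr.
rewrite exchange_big /=; apply: eq_bigr => t _.
rewrite /mulmx_band mulr_suml; apply: eq_bigr => s _; by rewrite mulrA.
Qed.

Lemma mb_idl N (B : mx R) : mulmx_band N (@idmx R) B = B.
Proof.
fext; rewrite mbE; transitivity (isum i 1 (fun k => @idmx R i k * B k j)).
  apply: isum_eq => k /mulf_neq0P /andP [h1 h2].
  move: h1; rewrite /idmx pnatr_eq0 eqb0 negbK => /eqP <-; apply/and4P; split; lia.
by rewrite isum1 /idmx eqxx mul1r.
Qed.

Lemma mb_idr N (A : mx R) : prop_le A N -> mulmx_band N A (@idmx R) = A.
Proof.
move=> hA; fext; rewrite mbE; transitivity (isum j 1 (fun k => A i k * @idmx R k j)).
  apply: isum_eq => k /mulf_neq0P /andP [h1 h2].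
  move: h2; rewrite /idmx pnatr_eq0 eqb0 negbK => /eqP hk.
  move: h1; rewrite hk => h1; have := propP hA h1; move=> *; apply/and4P; split; lia.
by rewrite isum1 /idmx eqxx mulr1.
Qed.

Lemma adj_prop (A : mx R) N : prop_le A N -> prop_le (adj A) N.
Proof.
move=> h i j hij; rewrite /adj h ?conjc0 //; lia.
Qed.

Lemma adjK (A : mx R) : adj (adj A) = A.
Proof. by fext; rewrite /adj conjcK. Qed.

Lemma mb_adj a b (A B : mx R) : prop_le A a -> prop_le B b ->
  adj (mulmx_band a A B) = mulmx_band b (adj B) (adj A).
Proof.
move=> hA hB; fext; rewrite /adj.
transitivity (isum (j - a%:Z) (a + a).+1 (fun k => conjc (B k i) * conjc (A j k))).
  rewrite /mulmx_band rmorph_sum; apply: eq_bigr => t _; by rewrite rmorphM mulrC.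
rewrite mbE; apply: isum_eq => k /mulf_neq0P /andP [h1 h2].
have h1' : B k i != 0 by apply: contraNneq h1 => ->; rewrite conjc0.
have h2' : A j k != 0 by apply: contraNneq h2 => ->; rewrite conjc0.
have := propP hA h2'; have := propP hB h1'; move=> *; apply/and4P; split; lia.
Qed.

End Band.

Arguments isum {R}.
Arguments propP {R A N i j}.

Section Key.
Variable C : numClosedFieldType.
Local Open Scope sesquilinear_scope.
Local Notation "B ^!" :=
  (orthomx conjC (mx_of_hermitian (hermitian1mx _)) B) : matrix_set_scope.

Lemma trmxC_mul m n p (A : 'M[C]_(m, n)) (B : 'M[C]_(n, p)) :
  (A *m B) ^t* = B ^t* *m A ^t*.
Proof. by rewrite trmx_mul map_mxM. Qed.

Definition Qdef n (P : 'M[C]_n) : 'M[C]_n :=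
  castmx (add_rank_ortho (P ^t*), erefl n) (schmidt_complete (P ^t*)).

Arguments Qdef {n}.

Lemma key n (P N : 'M[C]_n) : P ^t* *m N = 0 -> P *m P ^t* + N *m N ^t* = 1%:M ->
  let Q := Qdef P in [/\ Q \is unitarymx,
    (forall (i j : 'I_n), (i < \rank P)%N -> (Q *m N) i j = 0),
    (forall (i j : 'I_n), (\rank P <= i)%N -> (Q *m P) i j = 0) &
    \tr (P *m P ^t*) = (\rank P)%:R].
Proof.
move=> hPN hPP.
rewrite /Qdef /schmidt_complete.
set X := P ^t*.
have rX : \rank X = \rank P by rewrite /X mxrank_map mxrank_tr.
set hr := add_rank_ortho X.
set A := schmidt (row_base X); set B := schmidt (row_base X^!%MS).
have hAN : A *m N = 0.
  have : (A <= X)%MS.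
    by rewrite /A (eqmx_schmidt_free (row_base_free X)) eq_row_base.
  by case/submxP => D ->; rewrite -mulmxA hPN mulmx0.
have hBP : B *m P = 0.
  have : (B <= X^!)%MS.
    by rewrite /B (eqmx_schmidt_free (row_base_free _)) eq_row_base.
  by move/orthomx1P; rewrite /X trmxCK.
set Q0 := col_mx A B.
move=> /=; set Q := castmx (hr, erefl n) Q0.
have Q0u : Q0 \is unitarymx := schmidt_complete_unitarymx X.
have QE : forall (Y : 'M[C]_n) i j, (Q *m Y) i j = (Q0 *m Y) (cast_ord (esym hr) i) j.
  by move=> Y i j; rewrite !mxE; apply: eq_bigr => k _; rewrite castmxE cast_ord_id.
have hQN : forall (i j : 'I_n), (i < \rank P)%N -> (Q *m N) i j = 0.
  move=> i j hi; rewrite QE.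
  have hi' : (i < \rank X)%N by rewrite rX.
  have -> : cast_ord (esym hr) i = lshift (\rank X^!%MS) (Ordinal hi').
    by apply: val_inj.
  by rewrite /Q0 mul_col_mx col_mxEu hAN mxE.
have hQP : forall (i j : 'I_n), (\rank P <= i)%N -> (Q *m P) i j = 0.
  move=> i j hi.
  have hi' : (i - \rank X < \rank X^!%MS)%N.
    have := ltn_ord i; rewrite -{2}hr rX; lia.
  rewrite QE.
  have -> : cast_ord (esym hr) i = rshift (\rank X) (Ordinal hi').
    by apply: val_inj => /=; rewrite rX subnKC.
  by rewrite /Q0 mul_col_mx col_mxEd hBP mxE.
clearbody Q0.
have Qu : Q \is unitarymx.
  apply/unitarymxP/matrixP => i j.
  move/unitarymxP/matrixP: Q0u => /(_ (cast_ord (esym hr) i) (cast_ord (esym hr) j)).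
  rewrite !mxE => <-; apply: eq_bigr => k _; rewrite !mxE !castmxE !cast_ord_id.
  done.
split => //.
have QtQ : Q ^t* *m Q = 1%:M.
  by have := Qu; rewrite -trmxC_unitary => /unitarymxP; rewrite trmxCK.
have eq1 : (Q *m P) *m (Q *m P) ^t* + (Q *m N) *m (Q *m N) ^t* = 1%:M.
  have e : forall Y : 'M[C]_n, (Q *m Y) *m (Q *m Y) ^t* = Q *m (Y *m Y ^t*) *m Q ^t*.
    by move=> Y; rewrite trmxC_mul !mulmxA.
  by rewrite !e -mulmxDl -mulmxDr hPP mulmx1 (unitarymxP Qu).
have -> : \tr (P *m P ^t*) = \tr ((Q *m P) *m (Q *m P) ^t*).
  symmetry; rewrite trmxC_mul -mulmxA mxtrace_mulC -!mulmxA QtQ mulmx1.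
  done.
have diag : forall i : 'I_n, ((Q *m P) *m (Q *m P) ^t*) i i = ((i < \rank P)%N)%:R.
  move=> i; case: ltnP => hi.
    have h := congr1 (fun M : 'M[C]_n => M i i) eq1; simpl in h.
    have hz : ((Q *m N) *m (Q *m N) ^t*) i i = 0.
      by rewrite mxE big1 // => k _; rewrite hQN // mul0r.
    move: h; rewrite mxE hz addr0 => ->; rewrite mxE eqxx //.
  rewrite mxE big1 // => k _; by rewrite hQP // mul0r.
rewrite /mxtrace; under eq_bigr => i _ do rewrite diag.
rewrite -(big_mkord xpredT (fun i => ((i < \rank P)%N)%:R)).
have rn : (\rank P <= n)%N by rewrite rank_leq_col.
rewrite (big_cat_nat (leq0n _) rn) /= [X in _ + X]big1_seq ?addr0; last first.
  by move=> i /andP [_]; rewrite mem_index_iota => /andP [h _]; rewrite ltnNge h.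
rewrite big_nat_cond (eq_bigr (fun _ => 1)); last first.
  by move=> i /andP [/andP [_ ->] _].
by rewrite -big_nat_cond big_mkord sumr_const card_ord.
Qed.

End Key.
Arguments Qdef {C n}.
Arguments key {C n P N}.

Local Open Scope sesquilinear_scope.

Section Blocks.
Variable R : realType.
Local Notation C := (R[i]).
Variables (L : nat) (U : mx R).
Hypothesis hL : (1 <= L)%N.
Hypothesis hP : prop_le U L.
Hypothesis hU1 : mulmx_band L (adj U) U = @idmx R.
Hypothesis hU2 : mulmx_band L U (adj U) = @idmx R.
Local Notation M := (2 * L)%N.

Definition Pm (n : int) : 'M[C]_M :=
  \matrix_(a, b) U (M%:Z * n + a%:Z) (M%:Z * n - L%:Z + b%:Z).
Definition Nm (n : int) : 'M[C]_M :=
  \matrix_(a, b) U (M%:Z * n + a%:Z) (M%:Z * n + L%:Z + b%:Z).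

Lemma conjc_neq0 (z : C) : conjc z != 0 -> z != 0.
Proof. by apply: contraNneq => ->; rewrite conjc0. Qed.

Lemma F1 n : (Pm n)^t* *m Nm n = 0.
Proof.
apply/matrixP => b b'; rewrite mxE [RHS]mxE.
transitivity (isum (M%:Z * n) M (fun k => conjc (U k (M%:Z * n - L%:Z + b%:Z)) *
   U k (M%:Z * n + L%:Z + b'%:Z))).
  by apply: eq_bigr => a _; rewrite !mxE.
transitivity (mulmx_band L (adj U) U (M%:Z * n - L%:Z + b%:Z) (M%:Z * n + L%:Z + b'%:Z)).
  rewrite mbE; apply: isum_eq => k /mulf_neq0P /andP [/conjc_neq0 h1 h2].
  have := propP hP h1; have := propP hP h2; have := ltn_ord b; have := ltn_ord b'.
  move=> *; apply/and4P; split; lia.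
rewrite hU1 /idmx.
have -> : (M%:Z * n - L%:Z + b%:Z == M%:Z * n + L%:Z + b'%:Z) = false.
  by apply/eqP; have := ltn_ord b; lia.
by [].
Qed.

Lemma F2 n : Pm n *m (Pm n)^t* + Nm n *m (Nm n)^t* = 1%:M.
Proof.
apply/matrixP => a a'; rewrite !mxE.
transitivity (isum (M%:Z * n - L%:Z) (M + M)
  (fun k => U (M%:Z * n + a%:Z) k * conjc (U (M%:Z * n + a'%:Z) k))).
  rewrite isum_cat; congr (_ + _); apply: eq_bigr => b _ /=; rewrite !mxE //.
  have -> : M%:Z * n - L%:Z + M%:Z + b%:Z = M%:Z * n + L%:Z + b%:Z by lia.
  done.
transitivity (mulmx_band L U (adj U) (M%:Z * n + a%:Z) (M%:Z * n + a'%:Z)).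
  rewrite mbE; apply: isum_eq => k /mulf_neq0P /andP [h1 h2].
  have := propP hP h1; have := ltn_ord a; move=> *; apply/and4P; split; lia.
rewrite hU2 /idmx; congr (_%:R); congr (nat_of_bool _).
by apply/idP/idP => /eqP h; apply/eqP; [apply: val_inj => /=; lia | rewrite h].
Qed.

Lemma F3 n : (Pm n)^t* *m Pm n + (Nm (n - 1))^t* *m Nm (n - 1) = 1%:M.
Proof.
apply/matrixP => b b'; rewrite !mxE.
have e : forall t : int, M%:Z * (n - 1) + L%:Z + t = M%:Z * n - L%:Z + t.
  by move=> t; rewrite mulrBr mulr1; lia.
have e' : forall t : int, M%:Z * (n - 1) + t = M%:Z * n - M%:Z + t.
  by move=> t; rewrite mulrBr mulr1.
transitivity (isum (M%:Z * n - M%:Z) (M + M)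
  (fun k => conjc (U k (M%:Z * n - L%:Z + b%:Z)) * U k (M%:Z * n - L%:Z + b'%:Z))).
  rewrite isum_cat addrC; congr (_ + _); apply: eq_bigr => a _ /=; rewrite !mxE //.
    by rewrite !e e'.
  by have -> : M%:Z * n - M%:Z + M%:Z + a%:Z = M%:Z * n + a%:Z by lia.
transitivity (mulmx_band L (adj U) U (M%:Z * n - L%:Z + b%:Z) (M%:Z * n - L%:Z + b'%:Z)).
  rewrite mbE; apply: isum_eq => k /mulf_neq0P /andP [/conjc_neq0 h1 h2].
  have := propP hP h1; have := ltn_ord b; move=> *; apply/and4P; split; lia.
rewrite hU1 /idmx; congr (_%:R); congr (nat_of_bool _).
by apply/idP/idP => /eqP h; apply/eqP; [apply: val_inj => /=; lia | rewrite h].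
Qed.

Definition fP n := \tr (Pm n *m (Pm n)^t*).

Lemma trace_rel n : fP n = fP (n - 1).
Proof.
have e2 := congr1 mxtrace (F2 (n - 1)); have e3 := congr1 mxtrace (F3 n).
rewrite !mxtraceD in e2 e3.
rewrite (mxtrace_mulC (Pm n ^t*)) (mxtrace_mulC (Nm (n - 1) ^t*)) in e3.
apply: (addIr (\tr (Nm (n - 1) *m (Nm (n - 1))^t*))).
by rewrite /fP e3 e2.
Qed.

Lemma trace_const n : fP n = fP 0.
Proof.
case: n => k.
  elim: k => [//|k IH]; rewrite trace_rel.
  by have -> : (Posz k.+1 - 1 = Posz k)%R by lia.
elim: k => [|k IH].
  by rewrite [RHS]trace_rel; congr fP; rewrite NegzE; lia.
by rewrite -IH (trace_rel (Negz k)); congr fP; rewrite !NegzE; lia.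
Qed.

Lemma isum_rev (n : nat) (F : int -> C) :
  isum (- n%:Z) n F = \sum_(t < n) F (- (t.+1)%:Z).
Proof.
rewrite /isum (reindex_inj rev_ord_inj) /=; apply: eq_bigr => t _; congr F.
have := ltn_ord t; lia.
Qed.

Lemma fP0 : index_band L U = 0 -> fP 0 = L%:R.
Proof.
move=> hi.
pose nn j k := conjc (U k j) * U k j.
have col : forall j, isum (j - L%:Z) (L + L).+1 (nn j) = 1.
  by move=> j; have h := congr1 (fun T => T j j) hU1; rewrite /idmx eqxx /= in h; exact h.
have s1 : fP 0 = \sum_(b < M) isum 0 M (nn (- L%:Z + b%:Z)).
  rewrite /fP mxtrace_mulC; apply: eq_bigr => b _; rewrite mxE; apply: eq_bigr => a _.
  by rewrite !mxE /nn mulr0 !add0r.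
have s2 : \sum_(b < M) isum 0 M (nn (- L%:Z + b%:Z)) =
    isum (- L%:Z) (L + L) (fun j => isum 0 M (nn j)).
  change (isum (- L%:Z) M (fun j => isum 0 M (nn j)) = isum (- L%:Z) (L + L) (fun j => isum 0 M (nn j))).
  by rewrite (_ : M = (L + L)%N) //; lia.
rewrite s1 s2 isum_cat (addNr (L%:Z)).
set X := \sum_(a < L) \sum_(b < L) `|U a%:Z (- (b.+1)%:Z)| ^+ 2.
set Y := \sum_(a < L) \sum_(b < L) `|U (- (a.+1)%:Z) b%:Z| ^+ 2.
have hA : isum (- L%:Z) L (fun j => isum 0 M (nn j)) = X.
  rewrite isum_rev /X [RHS]exchange_big; apply: eq_bigr => b _.
  transitivity (isum 0 L (nn (- (b.+1)%:Z))).
    symmetry; apply: isum_sub => [k h1 h2 /mulf_neq0P /andP [/conjc_neq0 h3 h4]| |].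
    - have := propP hP h4; move=> *; apply/andP; split; lia.
    - lia.
    - lia.
  by rewrite /isum; apply: eq_bigr => a _; rewrite /nn add0r normCK mulrC.
have e : forall b : int, 0 <= b -> b < L%:Z ->
    isum 0 M (nn b) = 1 - isum (- L%:Z) L (nn b).
  move=> b hb1 hb2; rewrite -(col b) (@isum_eq _ (b - L%:Z) (L + L).+1 (- L%:Z) (L + M)); last first.
    move=> k /mulf_neq0P /andP [/conjc_neq0 h1 h2]; have := propP hP h1.
    move=> *; apply/and4P; split; lia.
  by rewrite isum_cat (addNr (L%:Z)) addrC addKr.
have hB : isum 0 L (fun j => isum 0 M (nn j)) = L%:R - Y.
  transitivity (\sum_(b < L) (1 - isum (- L%:Z) L (nn b%:Z))).
    by apply: eq_bigr => b _; rewrite add0r e //; have := ltn_ord b; lia.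
  rewrite sumrB sumr_const card_ord; congr (_ - _).
  rewrite /Y [RHS]exchange_big; apply: eq_bigr => b _; rewrite isum_rev.
  by apply: eq_bigr => a _; rewrite /nn normCK mulrC.
rewrite hA hB.
move: hi; rewrite /index_band -/X -/Y => /eqP; rewrite subr_eq0 => /eqP ->.
by rewrite addrC subrK.
Qed.

Hypothesis hi : index_band L U = 0.

Lemma rankP n : \rank (Pm n) = L.
Proof.
have [_ _ _ ht] := key (F1 n) (F2 n).
have := trace_const n; rewrite (fP0 hi) /fP ht => /eqP.
by rewrite eqr_nat => /eqP.
Qed.

Definition Qn n := Qdef (Pm n).
Definition Vm n : 'M[C]_M := (Qn n)^t*.

Lemma Qu n : Qn n \is unitarymx.
Proof. by have [] := key (F1 n) (F2 n). Qed.

Lemma QP n (i j : 'I_M) : (L <= i)%N -> (Qn n *m Pm n) i j = 0.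
Proof. by have [_ _ h _] := key (F1 n) (F2 n); move=> hi'; apply: h; rewrite rankP. Qed.

Lemma QN n (i j : 'I_M) : (i < L)%N -> (Qn n *m Nm n) i j = 0.
Proof. by have [_ h _ _] := key (F1 n) (F2 n); move=> hi'; apply: h; rewrite rankP. Qed.

Definition get (A : 'M[C]_M) (a b : nat) : C :=
  match insub a, insub b with Some i, Some j => A i j | _, _ => 0 end.

Lemma getE A (i j : 'I_M) : get A i j = A i j.
Proof. by rewrite /get !valK. Qed.

Definition V : mx R := fun i j =>
  if (i %/ M%:Z)%Z == (j %/ M%:Z)%Z then
    get (Vm (i %/ M%:Z)%Z) (absz (i - M%:Z * (i %/ M%:Z)%Z)%R) (absz (j - M%:Z * (i %/ M%:Z)%Z)%R)
  else 0.

Lemma divblk (q : int) (a : nat) : (a < M)%N -> ((M%:Z * q + a%:Z) %/ M%:Z)%Z = q.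
Proof.
move=> ha; rewrite mulrC divzMDl; last by apply/eqP; lia.
rewrite divz_small ?addr0 //; apply/andP; split; lia.
Qed.

Lemma divblk' (q k : int) : M%:Z * q <= k -> k < M%:Z * q + M%:Z -> (k %/ M%:Z)%Z = q.
Proof.
move=> h1 h2; have ha : (absz (k - M%:Z * q)%R < M)%N by lia.
by rewrite (_ : k = M%:Z * q + (absz (k - M%:Z * q)%R)%:Z); [apply: divblk | lia].
Qed.

Lemma decomp (i : int) : exists q (a : 'I_M), i = M%:Z * q + a%:Z.
Proof.
have h : (absz (i - M%:Z * (i %/ M%:Z)%Z)%R < M)%N by lia.
by exists (i %/ M%:Z)%Z, (Ordinal h) => /=; lia.
Qed.

Lemma V_blk q (a b : 'I_M) : V (M%:Z * q + a%:Z) (M%:Z * q + b%:Z) = Vm q a b.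
Proof.
rewrite /V (divblk q a (ltn_ord a)) (divblk q b (ltn_ord b)) eqxx.
have -> : absz (M%:Z * q + a%:Z - M%:Z * q)%R = a by lia.
have -> : absz (M%:Z * q + b%:Z - M%:Z * q)%R = b by lia.
by rewrite getE.
Qed.

Lemma V_supp i j : V i j != 0 -> (i %/ M%:Z)%Z = (j %/ M%:Z)%Z.
Proof. by rewrite /V; case: ifP => [/eqP //|_]; rewrite eqxx. Qed.

Arguments V_supp {i j}.

Lemma V_prop : prop_le V M.
Proof.
move=> i j hij; apply/eqP; apply: contraTT hij => /V_supp h; rewrite -leqNgt; lia.
Qed.

Lemma V_bd : block_diag 0 M V.
Proof.
move=> i j /V_supp h; exists (i %/ M%:Z)%Z; split; lia.
Qed.

Lemma conjc_neq0' (z : C) : z^*%C != 0 -> z != 0.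
Proof. exact: conjc_neq0. Qed.

Lemma eq_blk q (a b : 'I_M) : (M%:Z * q + a%:Z == M%:Z * q + b%:Z) = (a == b).
Proof.
by apply/idP/idP => /eqP h; apply/eqP; [apply: val_inj => /=; lia | rewrite h].
Qed.

Lemma V_unit1 : mulmx_band M V (adj V) = @idmx R.
Proof.
apply: functional_extensionality => i; apply: functional_extensionality => j.
have [q [a ->]] := decomp i; have [q' [b ->]] := decomp j.
rewrite mbE /idmx.
case: (eqVneq q q') => [<-|hq].
  transitivity (isum (M%:Z * q) M (fun k => V (M%:Z * q + a%:Z) k * adj V k (M%:Z * q + b%:Z))).
    apply: isum_eq => k /mulf_neq0P /andP [h1 _].
    have := V_supp h1; rewrite (divblk q a (ltn_ord a)) => hk.
    have := ltn_ord a; move=> *; apply/and4P; split; lia.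
  transitivity ((Vm q *m (Vm q)^t*) a b).
    by rewrite mxE; apply: eq_bigr => t _; rewrite /adj !V_blk !mxE.
  have -> : Vm q *m (Vm q)^t* = 1%:M.
    by rewrite /Vm; have := Qu q; rewrite -trmxC_unitary => /unitarymxP.
  by rewrite mxE eq_blk.
have -> : (M%:Z * q + a%:Z == M%:Z * q' + b%:Z) = false.
  apply/negP => /eqP h; move/eqP: hq; apply.
  by rewrite -(divblk q a (ltn_ord a)) h divblk.
apply: isum0 => t _; set k := (_ + t%:Z).
case: (eqVneq (V (M%:Z * q + a%:Z) k) 0) => [->|h1]; first by rewrite mul0r.
case: (eqVneq (V (M%:Z * q' + b%:Z) k) 0) => [h2|h2]; first by rewrite /adj h2 conjc0 mulr0.
move/eqP: hq; case.
have := V_supp h1; have := V_supp h2.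
by rewrite (divblk q a (ltn_ord a)) (divblk q' b (ltn_ord b)) => -> ->.
Qed.

Lemma V_unit2 : mulmx_band M (adj V) V = @idmx R.
Proof.
apply: functional_extensionality => i; apply: functional_extensionality => j.
have [q [a ->]] := decomp i; have [q' [b ->]] := decomp j.
rewrite mbE /idmx.
case: (eqVneq q q') => [<-|hq].
  transitivity (isum (M%:Z * q) M (fun k => adj V (M%:Z * q + a%:Z) k * V k (M%:Z * q + b%:Z))).
    apply: isum_eq => k /mulf_neq0P /andP [/conjc_neq0' h1 _].
    have := V_supp h1; rewrite (divblk q a (ltn_ord a)) => hk.
    have := ltn_ord a; move=> *; apply/and4P; split; lia.
  transitivity (((Vm q)^t* *m Vm q) a b).
    by rewrite mxE; apply: eq_bigr => t _; rewrite /adj !V_blk !mxE.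
  have -> : (Vm q)^t* *m Vm q = 1%:M.
    by rewrite /Vm trmxCK; apply/unitarymxP; apply: Qu.
  by rewrite mxE eq_blk.
have -> : (M%:Z * q + a%:Z == M%:Z * q' + b%:Z) = false.
  apply/negP => /eqP h; move/eqP: hq; apply.
  by rewrite -(divblk q a (ltn_ord a)) h divblk.
apply: isum0 => t _; set k := (_ + t%:Z).
case: (eqVneq (V k (M%:Z * q + a%:Z)) 0) => [h1|h1]; first by rewrite /adj h1 conjc0 mul0r.
case: (eqVneq (V k (M%:Z * q' + b%:Z)) 0) => [->|h2]; first by rewrite mulr0.
move/eqP: hq; case.
have := V_supp h1; have := V_supp h2.
by rewrite (divblk q a (ltn_ord a)) (divblk q' b (ltn_ord b)) => -> ->.
Qed.

Definition W := mulmx_band M (adj V) U.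

Lemma W_zero (n : int) (s : 'I_M) r :
  ~~ ((M%:Z * n - L%:Z <= r) && (r < M%:Z * n + L%:Z)) ->
  W r (M%:Z * n - L%:Z + s%:Z) = 0.
Proof.
move=> hr; have [q [a er]] := decomp r.
have hqr : (r %/ M%:Z)%Z = q by rewrite er divblk.
rewrite /W mbE.
have hs := ltn_ord s; have ha := ltn_ord a.
case: (eqVneq q n) => [eqn|neqn].
  transitivity (isum (M%:Z * n) M (fun k => adj V r k * U k (M%:Z * n - L%:Z + s%:Z))).
    apply: isum_eq => k /mulf_neq0P /andP [/conjc_neq0' h1 _].
    have := V_supp h1; rewrite hqr eqn => hk.
    move=> *; apply/and4P; split; lia.
  transitivity ((Qn n *m Pm n) a s).
    rewrite mxE; apply: eq_bigr => t _.
    by rewrite /adj er eqn V_blk /Vm !mxE conjcK.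
  by rewrite QP //; move: hr; rewrite er eqn; lia.
case: (eqVneq q (n - 1)) => [eqn|neqn1].
  have e1 : M%:Z * n - L%:Z + s%:Z = M%:Z * (n - 1) + L%:Z + s%:Z by rewrite mulrBr mulr1; lia.
  transitivity (isum (M%:Z * (n - 1)) M (fun k => adj V r k * U k (M%:Z * n - L%:Z + s%:Z))).
    apply: isum_eq => k /mulf_neq0P /andP [/conjc_neq0' h1 _].
    have := V_supp h1; rewrite hqr eqn => hk.
    rewrite mulrBr mulr1; move=> *; apply/and4P; split; lia.
  transitivity ((Qn (n - 1) *m Nm (n - 1)) a s).
    rewrite mxE; apply: eq_bigr => t _.
    by rewrite /adj er eqn V_blk /Vm !mxE conjcK e1.
  by rewrite QN //; move: hr; rewrite er eqn mulrBr mulr1; lia.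
apply: isum0 => t _; set k := (_ + t%:Z).
case: (eqVneq (V k r) 0) => [h1|h1]; first by rewrite /adj h1 conjc0 mul0r.
case: (eqVneq (U k (M%:Z * n - L%:Z + s%:Z)) 0) => [->|h2]; first by rewrite mulr0.
have := V_supp h1; rewrite hqr => hk.
have := propP hP h2 => hkb.
case: (ltP k (M%:Z * n)) => hkn.
  move/eqP: neqn1; case; rewrite -hk; apply: divblk'; rewrite mulrBr mulr1; lia.
move/eqP: neqn; case; rewrite -hk; apply: divblk'; lia.
Qed.

Lemma W_bd : block_diag (- L%:Z) M W.
Proof.
move=> r b hW; have [n [s eb]] := decomp (b + L%:Z).
have eb' : b = M%:Z * n - L%:Z + s%:Z by lia.
exists n.
have : (M%:Z * n - L%:Z <= r) && (r < M%:Z * n + L%:Z).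
  apply/negPn/negP => hr; move/eqP: hW; apply; rewrite eb'; exact: W_zero.
move=> /andP [h1 h2]; have := ltn_ord s; move=> hs; split; lia.
Qed.

Lemma main_sec : exists V W : mx R,
    [/\ block_diag 0 (2 * L) V /\ unitary_fp V,
        block_diag (- L%:Z) (2 * L) W /\ unitary_fp W &
        U = mulmx_band (2 * L) V W].
Proof.
have pV := V_prop.
have paV := @adj_prop R V M pV.
have paU := @adj_prop R U L hP.
have aW : adj W = mulmx_band L (adj U) V.
  by rewrite /W (@mb_adj R M L (adj V) U paV hP) adjK.
have VW : mulmx_band M V W = U.
  by rewrite /W -(@mb_assoc R M M V (adj V) U paV) V_unit1 mb_idl.
exists V, W; split.
- split; first exact: V_bd.
  by exists M; split; [exact: pV | split; [exact: V_unit2 | exact: V_unit1]].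
- split; first exact: W_bd.
  exists (M + L)%N; split; first exact: (@mb_prop R M L (adj V) U paV hP).
  split.
    rewrite aW (addnC M L) (@mb_assoc R L M (adj U) V W pV) VW; exact: hU1.
  rewrite aW /W (@mb_assoc R M L (adj V) U _ hP).
  rewrite -(@mb_assoc R L L U (adj U) V paU) hU2 mb_idl; exact: V_unit2.
- by rewrite VW.
Qed.

End Blocks.

Theorem theorem2p8 (R : realType) (L : nat) (U : mx R) :
  (1 <= L)%N ->
  unitary_fp U -> prop_le U L -> index_band L U = 0 ->
  exists V W : mx R,
    [/\ block_diag 0 (2 * L) V /\ unitary_fp V,
        block_diag (- L%:Z) (2 * L) W /\ unitary_fp W &
        U = mulmx_band (2 * L) V W].
Proof.
move=> hL [N0 [hN0 [h1 h2]]] hP hi.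
have hU1 : mulmx_band L (adj U) U = @idmx R.
  by rewrite -(@mb_eq R N0 L (adj U) U (@adj_prop R U N0 hN0) (@adj_prop R U L hP)).
have hU2 : mulmx_band L U (adj U) = @idmx R.
  by rewrite -(@mb_eq R N0 L U (adj U) hN0 hP).
exact: (@main_sec R L U hL hP hU1 hU2 hi).
Qed.
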